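(* Let $G=(V,E)$ be an $n$-vertex graph with $E = M_1\cup\dots\cup M_t$, where $M_1,\dots,M_t$ are pairwise edge-disjoint matchings each of size at least $r$. For $i\in[t]$ let $G_i=(V,M_1\cup\dots\cup M_i)$ and let $d_i = |E(G_i)\cap V^2(M_i)|/|M_i|$. Then for every $\alpha\in(0,1)$, $$\sum_{i=1}^t \frac{1}{d_i} = O\!\left(\frac{1}{\alpha^2}\cdot \mathrm{ORS}_n\big((1-\alpha)r\big)\cdot \log n\right),$$ where the constant in $O(\cdot)$ is absolute.
   Context: For a matching $M$, $V(M)$ denotes the set of vertices matched by $M$, and $E(G_i)\cap V^2(M_i)$ is the set of edges of $G_i$ with both endpoints in $V(M_i)$. A sequence $M_1,\dots,M_t$ of pairwise edge-disjoint matchings is called ordered-induced if for every $i\in[t]$, $M_i$ is an induced matching of the graph with edge set $M_1\cup\dots\cup M_i$, i.e., no edge of $M_1\cup\cdots\cup M_{i-1}$ has both endpoints in $V(M_i)$. An $n$-vertex graph is an $\mathrm{ORS}_n(r,t)$ graph if its edge set is the union of an ordered-induced sequence of $t$ matchings, each of size exactly $r$. $\mathrm{ORS}_n(r)$ denotes the maximum $t$ for which an $\mathrm{ORS}_n(r,t)$ graph exists (for non-integer $r$, $r$ is replaced by $\lceil r\rceil$). *)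

(* Defs.v *)
From HB Require Import structures.
From mathcomp Require Import all_boot all_order all_algebra.
From mathcomp Require Import all_classical all_reals all_analysis.
Set Implicit Arguments. Unset Strict Implicit. Unset Printing Implicit Defensive.
Import Order.TTheory GRing.Theory Num.Theory.

Definition is_edge (n : nat) (e : {set 'I_n}) : bool := #|e| == 2.

Definition is_matching (n : nat) (M : {set {set 'I_n}}) : bool :=
  [forall e in M, is_edge e] &&
  [forall e in M, forall f in M, (e != f) ==> [disjoint e & f]].

Definition Vm (n : nat) (M : {set {set 'I_n}}) : {set 'I_n} :=
  \bigcup_(e in M) e.

(* Edge set of G_i = M_1 u ... u M_i (indices 0-based here). *)
Definition Eupto (n t : nat) (M : 'I_t -> {set {set 'I_n}}) (i : 'I_t)
  : {set {set 'I_n}} := \bigcup_(j : 'I_t | j <= i) M j.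

Definition induced_count (n t : nat) (M : 'I_t -> {set {set 'I_n}}) (i : 'I_t)
  : nat := #|[set e in Eupto M i | e \subset Vm (M i)]|.

Definition is_ORS (n r t : nat) : bool :=
  [exists M : {ffun 'I_t -> {set {set 'I_n}}},
    [&& [forall i : 'I_t, is_matching (M i) && (#|M i| == r)],
        [forall i : 'I_t, forall j : 'I_t, (i != j) ==> [disjoint M i & M j]] &
        [forall i : 'I_t, forall j : 'I_t, (j < i)%N ==>
            [forall e in M j, ~~ (e \subset Vm (M i))]]]].

(* ORS_n(r) = max t such that an ORS_n(r,t) graph exists.  For r >= 1 the
   matchings are nonempty and edge-disjoint, so t <= #edges <= 2^n, hence
   the maximum over t <= 2^n is the true maximum. *)
Definition ORS (n r : nat) : nat :=
  \max_(t < (2 ^ n).+1 | is_ORS n r t) t.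

Definition ORSr (R : realType) (n : nat) (x : R) : nat :=
  ORS n `|Num.ceil x|%N.

(* Main.v *)
Require Import Defs.
From HB Require Import structures.
From mathcomp Require Import all_boot all_order all_algebra.
From mathcomp Require Import all_classical all_reals all_analysis.
From mathcomp Require Import zify ring lra.
Import Order.TTheory GRing.Theory Num.Theory.
Module Aux.
Local Set Implicit Arguments.
Local Unset Strict Implicit.
Local Notation inE := finset.inE.
Local Notation subsetP := fintype.subsetP.
Local Notation bigcup_sup := finset.bigcup_sup.
Local Notation subsetT := finset.subsetT.
Local Notation setIS := finset.setIS.
Local Notation in_setT := finset.in_setT.
Local Notation subset_trans := fintype.subset_trans.
Local Notation set0 := finset.set0.
Local Notation cards0 := finset.cards0.
Local Notation setP := finset.setP.
Local Notation subsetIl := finset.subsetIl.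
Local Notation subsetDl := finset.subsetDl.
Local Notation imsetP := finset.imsetP.
Local Notation powerset := finset.powerset.
Lemma take_sub (T : finType) (A : {set T}) k : (k <= #|A|)%N ->
  [set x in take k (enum A)] \subset A /\ #|[set x in take k (enum A)]| = k.
Proof.
move=> hk; split.
  by apply/subsetP => x; rewrite inE => /mem_take; rewrite mem_enum.
rewrite cardsE (card_uniqP _); last by apply: take_uniq; apply: enum_uniq.
by rewrite size_takel // -cardE.
Qed.

Lemma card_disj_bigcup (T : finType) (F : nat -> {set T}) L :
  (forall a b, a != b -> [disjoint F a & F b]) ->
  #|\bigcup_(c < L) F c| = (\sum_(c < L) #|F c|)%N.
Proof.
move=> dF; elim: L => [|L IH]; first by rewrite !big_ord0 cards0.
rewrite !big_ord_recr /= -IH cardsU.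
have -> : (\bigcup_(c < L) F c) :&: F L = set0.
  apply: disjoint_setI0; rewrite disjoint_sym; apply: bigcup_disjoint => c _.
  by rewrite disjoint_sym; apply: dF; rewrite neq_ltn ltn_ord.
by rewrite cards0 subn0.
Qed.

Lemma edge_of_matching n (M : {set {set 'I_n}}) e :
  is_matching M -> e \in M -> #|e| = 2.
Proof. by case/andP => /forall_inP H _ he; apply/eqP; apply: H. Qed.

Lemma matching_disj n (M : {set {set 'I_n}}) e f :
  is_matching M -> e \in M -> f \in M -> e != f -> [disjoint e & f].
Proof.
case/andP => _ /forall_inP H he hf ef.
by move/forall_inP: (H e he) => H2; exact: (implyP (H2 f hf)).
Qed.

Lemma matching_sub n (M M' : {set {set 'I_n}}) :
  M' \subset M -> is_matching M -> is_matching M'.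
Proof.
move=> sub /andP[/forall_inP H1 /forall_inP H2]; apply/andP; split;
  apply/forall_inP => e he.
  exact: H1 (subsetP sub e he).
apply/forall_inP => f hf.
by move/forall_inP: (H2 e (subsetP sub e he)) => H3; apply: H3 (subsetP sub f hf).
Qed.

Lemma Vm_sub n (M M' : {set {set 'I_n}}) : M' \subset M -> Vm M' \subset Vm M.
Proof.
move=> sub; apply/subsetP => x /bigcupP [e he hx]; apply/bigcupP; exists e => //.
exact: subsetP sub e he.
Qed.

Lemma in_Vm n (M : {set {set 'I_n}}) e : e \in M -> e \subset Vm M.
Proof. by move=> he; apply: (bigcup_sup e he). Qed.

Definition BS n t (M : 'I_t -> {set {set 'I_n}}) (S : {set 'I_t}) (i : 'I_t)
  : {set {set 'I_n}} :=
  [set e in \bigcup_(j in S | (j < i)%N) M j | e \subset Vm (M i)].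

Lemma enum_sorted t (S : {set 'I_t}) : sorted (relpre val ltn) (enum S).
Proof.
rewrite /enum_mem -enumT.
apply: sorted_filter.
  move=> a b c; exact: ltn_trans.
by rewrite -sorted_map val_enum_ord; exact: iota_ltn_sorted.
Qed.

Lemma enum_mono t (S : {set 'I_t}) (k k' : 'I_#|S|) :
  (k' < k)%N -> (enum_val k' < enum_val k)%N.
Proof.
move=> lt.
have x0 : 'I_t := enum_val k.
rewrite !(enum_val_nth x0).
have := @sorted_ltn_nth _ (relpre val ltn) (fun b a c : 'I_t => @ltn_trans (val b) (val a) (val c)) x0 _ (enum_sorted S).
move=> /(_ k' k); rewrite /= !inE -cardE !ltn_ord.
by move/(_ isT isT lt).
Qed.
Lemma card_setT_set n : #|{set 'I_n}| = (2 ^ n)%N.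
Proof.
have -> : #|{set 'I_n}| = #|powerset [set: 'I_n]|.
  rewrite -cardsT (_ : [set: {set 'I_n}] = powerset [set: 'I_n]) //.
  by apply/setP => A; rewrite !inE subsetT.
by rewrite card_powerset cardsT card_ord.
Qed.

Lemma class_ORS n t (M : 'I_t -> {set {set 'I_n}}) (S : {set 'I_t}) r' :
  (0 < r')%N -> (forall i, is_matching (M i)) ->
  (forall i j, i != j -> [disjoint M i & M j]) ->
  (forall i, i \in S -> 2 * #|BS M S i| + r' <= #|M i|)%N ->
  (#|S| <= ORS n r')%N.
Proof.
move=> r0 Mm Md HS.
pose X i := Vm (BS M S i).
pose M2 i := M i :&: [set e : {set 'I_n} | [disjoint e & X i]].
pose M3 i := [set x in take r' (enum (M2 i))].
have M2sub i : M2 i \subset M i by apply: subsetIl.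
have cardX i : (#|X i| <= 2 * #|BS M S i|)%N.
  have H : (#|finset.cover (BS M S i)| <= \sum_(A in BS M S i) #|A|)%N.
    exact: (leq_card_cover (BS M S i)).
  have E : (\sum_(A in BS M S i) #|A| = \sum_(A in BS M S i) 2)%N.
    apply: eq_bigr => e; rewrite inE => /andP[/bigcupP[j _ hej] _].
    exact: edge_of_matching (Mm j) hej.
  by move: H; rewrite E sum_nat_const mulnC.
have cardM2 i : i \in S -> (r' <= #|M2 i|)%N.
  move=> iS; have H1 := HS i iS.
  pose Rst := M i :\: [set e : {set 'I_n} | [disjoint e & X i]].
  have HR : (#|Rst| <= #|X i|)%N.
    pose g (e : {set 'I_n}) := [pick x in e :&: X i].
    have gS e : e \in Rst -> exists2 x, g e = Some x & x \in e :&: X i.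
      rewrite inE => /andP[]; rewrite inE => nd _.
      rewrite /g; case: pickP => [x hx|h0]; first by exists x.
      exfalso; move: nd; rewrite -setI_eq0 => /negP; apply; apply/eqP/setP => x.
      by have := h0 x; rewrite /= => ->; rewrite inE.
    have ginj : {in Rst &, injective g}.
      move=> e f he hf gef.
      have [x gx hx] := gS e he; have [y gy hy] := gS f hf.
      move: gef; rewrite gx gy => -[exy]; subst y.
      apply/eqP; apply/negPn/negP => nef.
      have de := matching_disj (Mm i) (subsetP (subsetDl _ _) e he)
                   (subsetP (subsetDl _ _) f hf) nef.
      move: hx hy; rewrite !inE => /andP[xe _] /andP[xf _].
      by rewrite (disjointFr de xe) in xf.
    rewrite -(card_in_imset ginj) -(card_imset (X i) (@Some_inj _)).
    apply: subset_leq_card; apply/subsetP => o /imsetP [e he ->].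
    have [x gx hx] := gS e he; rewrite gx; apply/imsetP; exists x => //.
    by move: hx; rewrite inE => /andP[].
  have := cardsID [set e : {set 'I_n} | [disjoint e & X i]] (M i).
  rewrite -/(M2 i) -/Rst => HM.
  have HX := cardX i; move: H1 HR HM HX.
  move: (#|M2 i|) (#|Rst|) (#|X i|) (#|M i|) (#|BS M S i|) => a b c d e; lia.
have M3sub i : M3 i \subset M2 i.
  by apply/subsetP => x; rewrite inE => /mem_take; rewrite mem_enum.
have M3card i : i \in S -> #|M3 i| = r'.
  by move=> iS; case: (take_sub (cardM2 i iS)).
have M3M i : M3 i \subset M i by apply: subset_trans (M3sub i) (M2sub i).
pose h : 'I_#|S| -> 'I_t := enum_val.
pose Mf := [ffun k => M3 (h k)].
have ORSS : is_ORS n r' #|S|.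
  apply/existsP; exists Mf; apply/and3P; split.
  - apply/forallP => k; rewrite ffunE; apply/andP; split.
      exact: matching_sub (M3M _) (Mm _).
    by rewrite M3card // enum_valP.
  - apply/forallP => k; apply/forallP => k'; apply/implyP => kk'; rewrite !ffunE.
    apply: disjointW (M3M _) (M3M _) (Md _ _ _).
    by rewrite (inj_eq enum_val_inj).
  - apply/forallP => k; apply/forallP => k'; apply/implyP => lt.
    apply/forall_inP => e; rewrite !ffunE => he; apply/negP => sube.
    have he1 : e \in M (h k') by apply: (subsetP (M3M _)).
    have sube1 : e \subset Vm (M (h k)) by apply: subset_trans sube (Vm_sub (M3M _)).
    have eB : e \in BS M S (h k).
      rewrite inE sube1 andbT; apply/bigcupP; exists (h k') => //.
      by rewrite enum_valP /=; apply: enum_mono.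
    have eX : e \subset X (h k) by apply: in_Vm.
    have : (0 < #|e|)%N by rewrite (edge_of_matching (Mm _) he1).
    case/card_gt0P => x xe.
    move: (subsetP sube x xe) => /bigcupP [f hf xf].
    move: (subsetP (M3sub _) f hf); rewrite inE => /andP[_]; rewrite inE => dfX.
    by have := subsetP eX x xe; rewrite (disjointFr dfX xf).
have Sle : (#|S| < (2 ^ n).+1)%N.
  rewrite ltnS -card_setT_set.
  pose g (k : 'I_#|S|) := odflt set0 [pick e in Mf k].
  have gin k : g k \in Mf k.
    rewrite /g; case: pickP => [e he //|h0].
    have : (0 < #|Mf k|)%N by rewrite ffunE M3card ?enum_valP.
    by case/card_gt0P => e; rewrite h0.
  have ginj : injective g.
    move=> k k' gk; apply/eqP; apply/negPn/negP => kk'.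
    have := gin k; have := gin k'; rewrite -gk !ffunE => h1 h2.
    have dd : [disjoint M3 (h k) & M3 (h k')].
      apply: disjointW (M3M _) (M3M _) (Md _ _ _).
      by rewrite (inj_eq enum_val_inj).
    by rewrite (disjointFr dd h2) in h1.
  by have := leq_card g ginj; rewrite card_ord.
rewrite /ORS.
exact: (@leq_bigmax_cond _ (fun t : 'I_(2 ^ n).+1 => is_ORS n r' t)
          (fun t => nat_of_ord t) (Ordinal Sle) ORSS).
Qed.
Definition colset t (col : 'I_t -> nat) (c : nat) : {set 'I_t} :=
  [set j | col j == c].

Lemma BS_ext n t (M : 'I_t -> {set {set 'I_n}}) (col col' : 'I_t -> nat) c (i : 'I_t) :
  (forall j : 'I_t, (j < i)%N -> col j = col' j) ->
  BS M (colset col c) i = BS M (colset col' c) i.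
Proof.
move=> H.
have E : \bigcup_(j in colset col c | (j < i)%N) M j =
         \bigcup_(j in colset col' c | (j < i)%N) M j.
  apply: eq_bigl => j; rewrite !inE.
  by case: (ltnP j i) => [lt|ge]; rewrite ?andbT ?andbF ?H.
by rewrite /BS E.
Qed.

Lemma B_disj n t (M : 'I_t -> {set {set 'I_n}}) (col : 'I_t -> nat) (i : 'I_t) a b :
  (forall i j, i != j -> [disjoint M i & M j]) -> a != b ->
  [disjoint BS M (colset col a) i & BS M (colset col b) i].
Proof.
move=> Md ab; rewrite -setI_eq0; apply/eqP/setP => e; rewrite !inE.
apply/negbTE/negP => /andP[/andP[/bigcupP[j /andP[ja _] ej] _]
                           /andP[/bigcupP[k /andP[kb _] ek] _]].
move: ja kb; rewrite !inE => /eqP ja /eqP kb.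
case: (eqVneq j k) => [jk|jk].
  by move: ab; rewrite -ja -kb jk eqxx.
by have := Md j k jk; move/disjointFr => /(_ e ej); rewrite ek.
Qed.

Lemma B_count n t (M : 'I_t -> {set {set 'I_n}}) (col : 'I_t -> nat) (i : 'I_t) L :
  (forall i j, i != j -> [disjoint M i & M j]) ->
  (\sum_(c < L) #|BS M (colset col c) i| + #|M i| <= induced_count M i)%N.
Proof.
move=> Md.
rewrite -(@card_disj_bigcup _ (fun c => BS M (colset col c) i) L); last first.
  by move=> a b ab; apply: B_disj.
set U := \bigcup_(c < L) _.
have dU : [disjoint U & M i].
  rewrite disjoint_sym; apply: bigcup_disjoint => c _.
  rewrite -setI_eq0; apply/eqP/setP => e; rewrite !inE.
  apply/negbTE/negP => /andP[ei /andP[/bigcupP[j /andP[_ ji] ej] _]].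
  have ji' : j != i by rewrite neq_ltn ji.
  by have := Md j i ji'; move/disjointFr => /(_ e ej); rewrite ei.
have sub : U :|: M i \subset [set e in Eupto M i | e \subset Vm (M i)].
  apply/subsetP => e; rewrite !inE => /orP[/bigcupP[c _] | ei].
    rewrite inE => /andP[/bigcupP[j /andP[_ ji] ej] se]; rewrite se andbT.
    by apply/bigcupP; exists j => //; exact: ltnW.
  rewrite (in_Vm ei) andbT; apply/bigcupP; exists i => //.
rewrite /induced_count; apply: leq_trans (subset_leq_card sub).
by rewrite cardsU (disjoint_setI0 dU) cards0 subn0.
Qed.
Local Open Scope ring_scope.

Definition good (R : realType) n t (M : 'I_t -> {set {set 'I_n}}) (alpha : R)
  (col : 'I_t -> nat) (c : nat) (i : 'I_t) : bool :=
  ((2 * #|BS M (colset col c) i|)%N%:R <= alpha * (#|M i|)%:R).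

Lemma coloring (R : realType) n t (M : 'I_t -> {set {set 'I_n}}) (alpha : R) :
  0 < alpha -> exists col : 'I_t -> nat, forall i,
    good M alpha col (col i) i /\ forall c, (c < col i)%N -> ~~ good M alpha col c i.
Proof.
move=> a0.
pose Q (col : 'I_t -> nat) i :=
  good M alpha col (col i) i /\ forall c, (c < col i)%N -> ~~ good M alpha col c i.
suff: forall k, exists col : 'I_t -> nat, forall i : 'I_t, (i < k)%N -> Q col i.
  by move/(_ t) => [col H]; exists col => i; exact: H i (ltn_ord i).
elim=> [|k [col IH]]; first by exists (fun=> 0%N).
case: (ltnP k t) => [kt|tk]; last first.
  by exists col => i ik; apply: IH; apply: leq_trans (ltn_ord i) tk.
pose i0 := Ordinal kt.
have ex : exists c, good M alpha col c i0.
  exists (\max_(j : 'I_t) col j).+1; rewrite /good.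
  have -> : BS M (colset col (\max_(j : 'I_t) col j).+1) i0 = set0.
    apply/setP => e; rewrite !inE; apply/negbTE/negP.
    move=> /andP[/bigcupP[j /andP[] ]]; rewrite inE => /eqP cj _ _ _.
    by have := leq_bigmax j (F := col); rewrite cj ltnn.
  by rewrite cards0 muln0 mulr_ge0 // ltW.
case: (ex_minnP ex) => c0 g0 min0.
pose col' (j : 'I_t) := if j == i0 then c0 else col j.
have agree (i j : 'I_t) : (j < i)%N -> (i <= i0)%N -> col j = col' j.
  move=> ji ii0; rewrite /col'; case: eqP => // ej.
  by move: ji ii0; rewrite ej => /leq_trans H /H; rewrite ltnn.
have gext (i : 'I_t) c : (i <= i0)%N -> good M alpha col' c i = good M alpha col c i.
  by move=> ii0; rewrite /good (@BS_ext _ _ M col col' c i) // => j ji; apply: agree ii0.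
exists col' => i; rewrite ltnS leq_eqVlt => /orP[/eqP ik | ik].
  have ei : i = i0 by apply: val_inj.
  have ci : col' i = c0 by rewrite /col' ei eqxx.
  rewrite /Q ci !gext ?ei ?leqnn //; split => // c cc.
  rewrite gext ?leqnn //.
  by apply/negP => gc; have := min0 c gc; rewrite leqNgt cc.
have ii0 : (i <= i0)%N by apply: ltnW.
have ci : col' i = col i.
  by rewrite /col'; case: eqP => // ei; move: ik; rewrite ei ltnn.
have [H1 H2] := IH i ik.
rewrite /Q ci !gext //; split => // c cc; rewrite gext //; exact: H2.
Qed.
Lemma ic_ge n t (M : 'I_t -> {set {set 'I_n}}) (i : 'I_t) :
  (forall i j, i != j -> [disjoint M i & M j]) ->
  (#|M i| <= induced_count M i)%N.
Proof. by move=> Md; have := @B_count n t M (fun=> 0%N) i 0 Md; rewrite big_ord0. Qed.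

Lemma ic_le n t (M : 'I_t -> {set {set 'I_n}}) (i : 'I_t) :
  (forall i, is_matching (M i)) -> (induced_count M i <= n ^ 2)%N.
Proof.
move=> Mm; rewrite /induced_count.
apply: (@leq_trans #|[set A : {set 'I_n} | #|A| == 2%N]|).
  apply: subset_leq_card; apply/subsetP => e; rewrite !inE.
  move=> /andP[/bigcupP[j _ ej] _]; by rewrite (edge_of_matching (Mm j) ej).
rewrite card_draws card_ord bin2 leq_half_double.
have : (n * n.-1 <= n * n)%N by rewrite leq_mul2l leq_pred orbT.
rewrite -mul2n expnS expn1; lia.
Qed.

Definition g (R : realType) (alpha : R) (c : nat) : R :=
  if c is 0%N then 1 else 2 / (c%:R * alpha).

Lemma col_bound (R : realType) n t (M : 'I_t -> {set {set 'I_n}}) (alpha : R) col i :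
  (forall i j, i != j -> [disjoint M i & M j]) -> (0 < #|M i|)%N ->
  (forall c, (c < col i)%N -> ~~ good M alpha col c i) ->
  (col i)%:R * alpha <= 2 * ((induced_count M i)%:R / (#|M i|)%:R).
Proof.
move=> Md m0 H2.
have H : \sum_(c < col i) (alpha * (#|M i|)%:R) <=
         \sum_(c < col i) ((2 * #|BS M (colset col c) i|)%N%:R : R).
  apply: ler_sum => c _; apply: ltW; rewrite ltNge; exact: H2 c (ltn_ord c).
move: H; rewrite sumr_const card_ord -natr_sum -big_distrr /=.
have HB := @B_count n t M col i (col i) Md.
have : ((2 * \sum_(c < col i) #|BS M (colset col c) i|)%N%:R <= (2 * induced_count M i)%N%:R :> R).
  rewrite ler_nat; lia.
rewrite !natrM => h1 h2.
have mpos : (0 : R) < (#|M i|)%:R by rewrite ltr0n.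
rewrite mulrA ler_pdivlMr //.
rewrite -mulr_natl in h2; lra.
Qed.

Lemma harm (R : realType) m : (0 < m)%N ->
  \sum_(c < m) ((c.+1)%:R : R)^-1 <= 1 + ln (m%:R : R).
Proof.
elim: m => // m IH _.
case: m IH => [|m] IH.
  by rewrite big_ord_recr big_ord0 /= add0r ln1 addr0 invr1.
rewrite big_ord_recr /=.
have {}IH := IH isT.
set a : R := (m.+1)%:R.
have b1 : (m.+2)%:R = a + 1 :> R by rewrite /a -natr1.
rewrite b1.
have a0 : 0 < a by rewrite ltr0n.
have key : (a + 1)^-1 <= ln (a + 1) - ln a.
  have e1 : a = (a + 1) * (1 + - (a + 1)^-1) by field; lra.
  have hb : (a + 1) \is Num.pos by rewrite posrE; lra.
  have lt1 : (a + 1)^-1 < 1 by rewrite invf_lt1; lra.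
  have hc : (1 + - (a + 1)^-1) \is Num.pos by rewrite posrE; lra.
  have hl : ln (1 + - (a + 1)^-1) <= - (a + 1)^-1 by apply: le_ln1Dx; lra.
  have : ln a = ln (a + 1) + ln (1 + - (a + 1)^-1).
    by rewrite -lnM // -e1.
  lra.
lra.
Qed.
Lemma f_le (R : realType) (alpha : R) (c ic m : nat) :
  0 < alpha -> (0 < m)%N -> (m <= ic)%N ->
  c%:R * alpha <= 2 * (ic%:R / m%:R) -> (ic%:R / m%:R)^-1 <= g alpha c.
Proof.
move=> a0 m0 mic hc.
have mpos : (0 : R) < m%:R by rewrite ltr0n.
have d1 : 1 <= ic%:R / m%:R :> R by rewrite ler_pdivlMr // mul1r ler_nat.
case: c hc => [|c] hc /=.
  by rewrite invf_le1 //; lra.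
have cpos : (0 : R) < c.+1%:R by rewrite ltr0n.
have ca : 0 < c.+1%:R * alpha by apply: mulr_gt0.
rewrite -(invf_div (c.+1%:R * alpha) 2) lef_pV2 ?posrE //; try lra.

Qed.

Lemma color_class (R : realType) n t (M : 'I_t -> {set {set 'I_n}}) (r : nat)
  (alpha : R) col c :
  (1 <= r)%N -> (forall i, is_matching (M i)) -> (forall i, (r <= #|M i|)%N) ->
  (forall i j, i != j -> [disjoint M i & M j]) -> 0 < alpha < 1 ->
  (forall i, good M alpha col (col i) i) ->
  (#|colset col c| <= ORSr n ((1 - alpha) * r%:R))%N.
Proof.
move=> r1 Mm Mr Md /andP[a0 a1] G.
rewrite /ORSr.
set x := (1 - alpha) * r%:R.
have rpos : (0 : R) < r%:R by rewrite ltr0n.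
have x0 : 0 < x by apply: mulr_gt0 => //; lra.
set r' := `|Num.ceil x|%N.
have c0 : 0 <= Num.ceil x by apply: ltW; rewrite ceil_gt0.
have hr' : (r'%:Z = Num.ceil x) by rewrite /r' gez0_abs.
apply: class_ORS => //.
  by rewrite -ltz_nat hr' ceil_gt0.
move=> i; rewrite inE => /eqP ci.
have Gi := G i; rewrite /good ci in Gi.
move: Gi; set B := #|BS M (colset col c) i| => Gi.
have mr := Mr i.
have Bm : (2 * B <= #|M i|)%N.
  rewrite -(ler_nat R); apply: le_trans Gi _.
  have : (0 : R) <= (#|M i|)%:R by rewrite ler0n.
  nra.
suff : (r' <= #|M i| - 2 * B)%N by lia.
rewrite -lez_nat hr' ceil_le_int.
have -> : (((#|M i| - 2 * B)%N%:Z)%:~R : R) = (#|M i| - 2 * B)%N%:R by [].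
rewrite natrB //.
have rm : (r%:R : R) <= (#|M i|)%:R by rewrite ler_nat.
have : 0 <= (1 - alpha) * ((#|M i|)%:R - r%:R) by apply: mulr_ge0; lra.
rewrite /x; nra.
Qed.
Lemma g_ge0 (R : realType) (alpha : R) c : 0 < alpha -> 0 <= g alpha c.
Proof.
move=> a0; rewrite /g; case: c => [|c]; first by lra.
apply: divr_ge0; first by lra.
by apply: mulr_ge0; [rewrite ler0n | lra].
Qed.
End Aux.
Import Aux.
Local Open Scope ring_scope.

Theorem lemma4p5 (R : realType) :
  exists C : R, 0 < C /\
  forall (n t r : nat) (M : 'I_t -> {set {set 'I_n}}),
    (1 <= r)%N ->
    (forall i, is_matching (M i)) ->
    (forall i, (r <= #|M i|)%N) ->
    (forall i j, i != j -> [disjoint M i & M j]) ->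
    forall alpha : R, 0 < alpha < 1 ->
      \sum_(i < t) ((induced_count M i)%:R / (#|M i|)%:R)^-1
        <= C / alpha ^+ 2 * (ORSr n ((1 - alpha) * r%:R))%:R * ln (n%:R).
Proof.
have l2 : (0 : R) < ln 2 by apply: ln_gt0; lra.
have l21 : ln (2 : R) <= 1.
  have := @le_ln1Dx R 1 ltac:(lra).
  by rewrite (_ : 1 + 1 = 2 :> R) //; lra.
exists (11 / ln 2); split; first by apply: divr_gt0 => //; lra.
move=> n t r M r1 Mm Mr Md alpha /andP[a0 a1].
set K := ORSr n ((1 - alpha) * r%:R).
have Kge : 0 <= (K%:R : R) by rewrite ler0n.
have lnn0 : 0 <= ln (n%:R : R).
  case: (posnP n) => [->|n0]; first by rewrite ln0.
  by apply: ln_ge0; rewrite ler1n.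
have Cge : 0 <= 11 / ln (2 : R) / alpha ^+ 2.
  apply: divr_ge0; first by apply: divr_ge0 => //; lra.
  by apply: exprn_ge0; lra.
case: t M Mm Mr Md => [|t] M Mm Mr Md.
  by rewrite big_ord0; apply: mulr_ge0 => //; apply: mulr_ge0.
have n2 : (2 <= n)%N.
  have : (0 < #|M ord0|)%N by apply: leq_trans r1 (Mr ord0).
  case/card_gt0P => e he.
  rewrite -[n in (_ <= n)%N](card_ord n); apply: leq_trans (max_card e).
  by rewrite (edge_of_matching (Mm ord0) he).
have [col Hcol] := @coloring R n t.+1 M alpha a0.
have m0 i : (0 < #|M i|)%N by apply: leq_trans r1 (Mr i).
have cb i : (col i)%:R * alpha <= 2 * ((induced_count M i)%:R / (#|M i|)%:R).
  exact: col_bound Md (m0 i) (Hcol i).2.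
have step1 : \sum_(i < t.+1) ((induced_count M i)%:R / (#|M i|)%:R)^-1
             <= \sum_(i < t.+1) g alpha (col i).
  apply: ler_sum => i _; exact: (f_le a0 (m0 i) (@ic_ge n t.+1 M i Md) (cb i)).
set maxc := \max_(i : 'I_t.+1) col i.
have colL i : (col i < maxc.+1)%N by rewrite ltnS /maxc leq_bigmax.
have step2 : \sum_(i < t.+1) g alpha (col i)
             = \sum_(j < maxc.+1) (#|colset col j|)%:R * g alpha j.
  rewrite (partition_big (fun i => (inord (col i) : 'I_maxc.+1)) xpredT) //=.
  apply: eq_bigr => j _.
  rewrite mulr_natl -sumr_const.
  apply: eq_big => i.
    by rewrite inE -val_eqE /= inordK.
  by move=> /eqP <-; rewrite inordK.
have step3 : \sum_(j < maxc.+1) (#|colset col j|)%:R * g alpha j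
             <= K%:R * \sum_(j < maxc.+1) g alpha j.
  rewrite mulr_sumr; apply: ler_sum => j _; apply: ler_wpM2r.
    exact: g_ge0.
  rewrite ler_nat; apply: color_class => //; first by rewrite a0 a1.
  by move=> i; exact: (Hcol i).1.
have nR : (2 : R) <= n%:R by rewrite ler_nat.
have Npos : 0 < 2 * (n%:R : R) ^+ 2 / alpha.
  by apply: divr_gt0 => //; apply: mulr_gt0; [lra | apply: exprn_gt0; lra].
have N1 : 1 <= 2 * (n%:R : R) ^+ 2 / alpha.
  rewrite ler_pdivlMr // mul1r.
  have : 1 <= (n%:R : R) ^+ 2 by rewrite expr2; nra.
  lra.
have step4 : \sum_(j < maxc.+1) g alpha j
             <= 1 + 2 / alpha * (1 + ln (2 * (n%:R : R) ^+ 2 / alpha)).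
  rewrite big_ord_recl /=.
  have e : \sum_(i < maxc) g alpha (lift ord0 i)
           = 2 / alpha * \sum_(i < maxc) ((i.+1)%:R)^-1.
    rewrite mulr_sumr; apply: eq_bigr => i _; rewrite lift0 /g.
    by rewrite invfM; ring.
  rewrite e lerD2l; apply: ler_wpM2l; first by apply: divr_ge0; lra.
  case: (posnP maxc) => [z|mpos].
    rewrite z big_ord0; have := ln_ge0 N1; lra.
  apply: le_trans (harm _ mpos) _; rewrite lerD2l.
  rewrite ler_ln ?posrE //; last by rewrite ltr0n.
  have cpos : (0 < #|'I_t.+1|)%N by rewrite card_ord.
  have [i0 hi0] := bigop.eq_bigmax col cpos.
  rewrite /maxc hi0.
  have dle : (induced_count M i0)%:R / (#|M i0|)%:R <= (n%:R : R) ^+ 2.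
    have mp : (0 : R) < (#|M i0|)%:R by rewrite ltr0n.
    rewrite ler_pdivrMr //.
    have h1 : ((induced_count M i0)%:R : R) <= (n ^ 2)%N%:R by rewrite ler_nat; exact: ic_le.
    have h2 : (1 : R) <= (#|M i0|)%:R by rewrite ler1n.
    rewrite natrX in h1.
    have : 0 <= (n%:R : R) ^+ 2 by apply: exprn_ge0; lra.
    nra.
  rewrite ler_pdivlMr //; have := cb i0; lra.
have step5 : ln (2 * (n%:R : R) ^+ 2 / alpha) <= 3 * ln (n%:R) + alpha^-1.
  have np : (0 : R) < n%:R by lra.
  have ai : 0 < alpha^-1 by rewrite invr_gt0.
  have le1 : 2 * (n%:R : R) ^+ 2 / alpha <= (n%:R ^+ 3) * alpha^-1.
    apply: ler_wpM2r; first by lra.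
    rewrite exprS; have : (0 : R) <= n%:R ^+ 2 by rewrite expr2; nra.
    nra.
  apply: le_trans (_ : ln ((n%:R ^+ 3) * alpha^-1) <= _).
    rewrite ler_ln ?posrE //; apply: mulr_gt0 => //; exact: exprn_gt0.
  rewrite lnM ?posrE //; last exact: exprn_gt0.
  rewrite lnXn //.
  have : ln (alpha^-1) <= alpha^-1 - 1.
    have := @le_ln1Dx R (alpha^-1 - 1).
    rewrite (_ : 1 + (alpha^-1 - 1) = alpha^-1); last by ring.
    apply; lra.
  rewrite -[ln (n%:R) *+ 3]mulr_natl; lra.
have lam_l : ln (2 : R) <= ln (n%:R : R) by rewrite ler_ln ?posrE //; lra.
have eC : 11 / ln (2 : R) / alpha ^+ 2 = 11 / ln 2 * (alpha^-1) ^+ 2 by rewrite exprVn.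
have a1' : 1 <= alpha^-1 by rewrite invf_ge1 //; lra.
move: step4 step5 lnn0 l2 l21 lam_l eC a1'.
move: (alpha^-1) => a; move: (ln (n%:R : R)) => l; move: (ln (2 : R)) => lam.
move=> step4 step5 lnn0 l2 l21 lam_l eC a1'.
set P := 1 + 2 * a * (1 + 3 * l + a).
have PP : P <= 11 / lam * a ^+ 2 * l.
  have l0 : 0 <= l by lra.
  have a0' : 0 <= a by lra.
  have a2a : a <= a ^+ 2 by rewrite expr2; nra.
  have h1 : 0 <= (a ^+ 2 - 1) * l by apply: mulr_ge0 => //; lra.
  have h2 : 0 <= a * (l - lam) by apply: mulr_ge0 => //; lra.
  have h3 : 0 <= (a ^+ 2 - a) * l by apply: mulr_ge0 => //; lra.
  have h4 : 0 <= (a * l) * (1 - lam) by apply: mulr_ge0; [exact: mulr_ge0 | lra].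
  have t1 : lam <= a ^+ 2 * l by lra.
  have t2 : a * lam <= a ^+ 2 * l by lra.
  have t3 : a * l * lam <= a ^+ 2 * l by lra.
  have t4 : a ^+ 2 * lam <= a ^+ 2 * l.
    apply: ler_wpM2l => //; exact: exprn_ge0 (le_trans ler01 a1').
  rewrite (_ : 11 / lam * a ^+ 2 * l = (11 * a ^+ 2 * l) / lam); last by ring.
  rewrite ler_pdivlMr //.
  rewrite /P; lra.
apply: le_trans step1 _; rewrite step2.
apply: le_trans step3 _.
rewrite eC.
apply: (@le_trans _ _ (K%:R * P)).
  apply: ler_wpM2l => //; apply: le_trans step4 _.
  rewrite /P lerD2l; apply: ler_wpM2l; lra.
rewrite (_ : 11 / lam * a ^+ 2 * K%:R * l = K%:R * (11 / lam * a ^+ 2 * l)); last by ring.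
by apply: ler_wpM2l.
Qed.
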